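(* For any $k \in \mathbb{N}$ and $n_1,\ldots,n_k \in \mathbb{N}$, $R_\mathrm{cyc}(S_{n_1},\ldots,S_{n_k}) = R(S_{n_1},\ldots,S_{n_k})$, where each $S_{n_j}$ is any star graph of order $n_j$.
   Context: All graphs are finite, simple and undirected, and a graph of order $n$ has vertex set $\{0,1,\ldots,n-1\}$; $K_n$ is the complete graph on $\{0,\ldots,n-1\}$. A $k$-edge-coloring of $K_n$ assigns each edge a color in $\{1,\ldots,k\}$. For a graph $H$ and such a coloring, an embedding of $H$ in color $j$ is an injective map $\varphi\colon V(H)\to V(K_n)$ such that for every edge $uv$ of $H$ the edge $\{\varphi(u),\varphi(v)\}$ has color $j$; it is increasing up to a cyclic permutation if there exists $t\in V(H)$ such that $(\varphi(t),\ldots,\varphi(|H|-1),\varphi(0),\ldots,\varphi(t-1))$ is increasing. $R(H_1,\ldots,H_k)$ is the smallest $n$ such that every $k$-edge-coloring of $K_n$ admits, for some $j$, an embedding of $H_j$ in color $j$; $R_\mathrm{cyc}$ is defined in the same way but requiring the embedding to be increasing up to a cyclic permutation. A star graph of order $n$ is a graph on $\{0,\ldots,n-1\}$ in which one vertex (the center, arbitrary) is adjacent to all others and there are no other edges. *)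

(* Defs.v *)
From mathcomp Require Import all_boot.
Set Implicit Arguments. Unset Strict Implicit. Unset Printing Implicit Defensive.

(* A graph of order m: a relation on 'I_m = {0,...,m-1} (simple: symmetric, irreflexive). *)

Definition star_graph (m : nat) (c : 'I_m) : rel 'I_m :=
  fun u v => (u != v) && ((u == c) || (v == c)).

(* A k-edge-coloring of K_n: a symmetric map on pairs of vertices with colors in 'I_k
   (colors 1..k of the paper are indexed 0..k-1; values on the diagonal are irrelevant). *)
Definition edge_coloring (n k : nat) (col : 'I_n -> 'I_n -> 'I_k) : Prop :=
  forall x y, col x y = col y x.

Definition embedding_in_color (m n k : nat) (H : rel 'I_m) (col : 'I_n -> 'I_n -> 'I_k)
  (j : 'I_k) (phi : 'I_m -> 'I_n) : Prop :=
  injective phi /\ forall u v, H u v -> col (phi u) (phi v) = j.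

Definition cyclically_increasing (m n : nat) (phi : 'I_m -> 'I_n) : Prop :=
  exists t : 'I_m, sorted ltn (map (fun i => nat_of_ord (phi i)) (rot t (enum 'I_m))).

Definition ramsey_prop (cyc : bool) (k : nat) (m : 'I_k -> nat)
  (H : forall j : 'I_k, rel 'I_(m j)) (n : nat) : Prop :=
  forall col : 'I_n -> 'I_n -> 'I_k, edge_coloring col ->
    exists j : 'I_k, exists phi : 'I_(m j) -> 'I_n,
      embedding_in_color (H j) col j phi /\ (cyc -> cyclically_increasing phi).

Definition is_least (P : nat -> Prop) (r : nat) : Prop :=
  P r /\ forall n, n < r -> ~ P n.

Definition is_ramsey_number k m H r := is_least (@ramsey_prop false k m H) r.
Definition is_cyc_ramsey_number k m H r := is_least (@ramsey_prop true k m H) r.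

(* Main.v *)
Require Import Defs.
From mathcomp Require Import all_boot zify.

Lemma nth_rot_gen (T : Type) (x0 : T) (s : seq T) t i :
  t <= size s -> i < size s -> nth x0 (rot t s) i = nth x0 s ((i + t) %% size s).
Proof.
move=> ht hi; rewrite /rot nth_cat size_drop.
case: ltnP => h.
  by rewrite nth_drop modn_small; [rewrite addnC | lia].
rewrite nth_take; last by lia.
have -> : i + t = (i - (size s - t)) + size s by lia.
by rewrite modnDr modn_small //; lia.
Qed.

Lemma cyc_of_plain (m n k : nat) (c : 'I_m) (col : 'I_n -> 'I_n -> 'I_k) j phi :
  edge_coloring col -> embedding_in_color (star_graph c) col j phi ->
  exists psi, embedding_in_color (star_graph c) col j psi /\ cyclically_increasing psi.
Proof.
move=> hsym [phi_inj hphi].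
have m0 : 0 < m by apply: leq_ltn_trans (ltn_ord c).
set Lm := map phi (enum 'I_m).
have uLm : uniq Lm by rewrite map_inj_uniq ?enum_uniq.
set S := sort (relpre val leq) Lm.
have pS : perm_eq S Lm by rewrite perm_sort.
have szS : size S = m by rewrite size_sort size_map size_enum_ord.
have uS : uniq S by rewrite sort_uniq.
have sS : sorted ltn (map val S).
  rewrite ltn_sorted_uniq_leq map_inj_uniq ?uS //=; last exact: val_inj.
  rewrite sorted_map.
  by apply: sort_sorted => a b; apply: leq_total.
have memS x : (x \in S) = (x \in Lm) by apply: perm_mem.
have cS : phi c \in S by rewrite memS map_f ?mem_enum.
set p := index (phi c) S.
have pm : p < m by rewrite -szS index_mem.
set d := p + (m - c).
pose psi (i : 'I_m) := nth (phi c) S ((i + d) %% m).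
have psi_c : psi c = phi c.
  rewrite /psi /d.
  have := ltn_ord c; move=> hc; have -> : c + (p + (m - c)) = p + m by lia.
  by rewrite modnDr modn_small // nth_index.
have psi_inj : injective psi.
  move=> a b; rewrite /psi => /eqP.
  rewrite nth_uniq ?szS ?ltn_pmod // eqn_modDr => /eqP.
  by rewrite !modn_small // => /val_inj.
have psi_in (i : 'I_m) : exists w, psi i = phi w.
  have : psi i \in Lm by rewrite -memS mem_nth // szS ltn_pmod.
  by case/mapP => w _ ->; exists w.
exists psi; split; first split => //.
  move=> u v /andP [uv /orP [/eqP eu | /eqP ev]].
    subst u; have [w hw] := psi_in v; rewrite psi_c hw; apply: hphi.
    rewrite /star_graph eqxx ?orbT ?orTb andbT.
    by apply/eqP => wc; move: uv; rewrite -(psi_inj v c) ?eqxx // hw psi_c wc.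
  subst v; have [w hw] := psi_in u; rewrite psi_c hw; apply: hphi.
  rewrite /star_graph eqxx ?orbT ?orTb andbT.
  by apply/eqP => wc; move: uv; rewrite (psi_inj u c) ?eqxx // hw psi_c wc.
have tm : (m - d %% m) %% m < m by rewrite ltn_pmod.
exists (Ordinal tm).
suff -> : [seq nat_of_ord (psi i) | i <- rot (Ordinal tm) (enum 'I_m)] = map val S by [].
apply: (@eq_from_nth _ 0); first by rewrite size_map size_rot size_enum_ord size_map szS.
rewrite size_map size_rot size_enum_ord => i im.
rewrite (nth_map c); last by rewrite size_rot size_enum_ord.
rewrite (nth_map (phi c)); last by rewrite szS.
rewrite nth_rot_gen ?size_enum_ord //=; last by apply: ltnW.
have hi : (i + (m - d %% m) %% m) %% m < m by rewrite ltn_pmod.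
rewrite (_ : nth c (enum 'I_m) _ = Ordinal hi); last first.
  by apply: val_inj; rewrite /= nth_enum_ord.
rewrite /psi /=; congr (val (nth _ _ _)).
have dm : d %% m < m by rewrite ltn_pmod.
have hx : ((m - d %% m) %% m + d) %% m = 0.
  rewrite modnDml {2}(divn_eq d m) addnCA modnMDl subnK ?modnn //.
  exact: ltnW.
by rewrite modnDml -addnA -modnDmr hx addn0 modn_small.
Qed.

Lemma ramsey_eq k (m : 'I_k -> nat) (ctr : forall j : 'I_k, 'I_(m j)) n :
  ramsey_prop true (fun j => star_graph (ctr j)) n <->
  ramsey_prop false (fun j => star_graph (ctr j)) n.
Proof.
split=> h col hc; have [j [phi [he _]]] := h col hc.
  by exists j, phi.
have [psi [he' hci]] := @cyc_of_plain _ _ _ _ _ _ _ hc he.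
by exists j, psi.
Qed.

Theorem proposition2p2 (k : nat) (m : 'I_k -> nat) (ctr : forall j : 'I_k, 'I_(m j))
  (r : nat) :
  is_cyc_ramsey_number (fun j => star_graph (ctr j)) r <->
  is_ramsey_number (fun j => star_graph (ctr j)) r.
Proof.
rewrite /is_cyc_ramsey_number /is_ramsey_number /is_least.
split=> [[h1 h2] | [h1 h2]]; split.
- by apply/ramsey_eq.
- by move=> n hn /ramsey_eq; apply: h2.
- by apply/ramsey_eq.
- by move=> n hn /ramsey_eq; apply: h2.
Qed.
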